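(* Let $G$ be a connected graph with no isolated vertices. If either (a) $\gamma_t(G)=\gamma_c(G)$, or (b) $\gamma_t(G)=\gamma_c(G)-1$, then $$\gamma_t(G) \ge \left\lceil \frac{3\gamma(G)+2\gamma_c(G)}{6}\right\rceil.$$
   Context: All graphs are finite, simple and undirected. A set $S\subseteq V(G)$ is a dominating set if every vertex not in $S$ is adjacent to some vertex of $S$; $\gamma(G)$ is the minimum size of a dominating set. A set $S$ is a total dominating set if every vertex of $G$ (including those in $S$) is adjacent to some vertex of $S$; $\gamma_t(G)$ is the minimum size of a total dominating set. A set $S$ is a connected dominating set if it is dominating and the subgraph induced by $S$ is connected; $\gamma_c(G)$ is the minimum size of a connected dominating set. *)

(* Defs.v *)
From mathcomp Require Import all_boot.
Set Implicit Arguments. Unset Strict Implicit. Unset Printing Implicit Defensive.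

Definition simple_graph (T : finType) (e : rel T) : Prop :=
  symmetric e /\ irreflexive e.

Definition graph_connected (T : finType) (e : rel T) : Prop :=
  forall x y : T, connect e x y.

Definition no_isolated (T : finType) (e : rel T) : Prop :=
  forall x : T, exists y : T, e x y.

Definition dominating (T : finType) (e : rel T) (S : {set T}) : bool :=
  [forall v, (v \in S) || [exists u in S, e u v]].

Definition total_dominating (T : finType) (e : rel T) (S : {set T}) : bool :=
  [forall v, [exists u in S, e u v]].

Definition induced_rel (T : finType) (e : rel T) (S : {set T}) : rel T :=
  [rel x y | [&& x \in S, y \in S & e x y]].

Definition connected_dominating (T : finType) (e : rel T) (S : {set T}) : bool :=
  dominating e S && [forall x in S, forall y in S, connect (induced_rel e S) x y].

(* minimum cardinality of a set with property P; the default #|T| is only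
   attained when no such set is smaller (the full vertex set has the
   property under the theorem's hypotheses) *)
Definition min_card (T : finType) (P : {set T} -> bool) : nat :=
  \big[minn/#|T|]_(S : {set T} | P S) #|S|.

Definition gamma (T : finType) (e : rel T) := min_card (dominating e).
Definition gamma_t (T : finType) (e : rel T) := min_card (total_dominating e).
Definition gamma_c (T : finType) (e : rel T) := min_card (connected_dominating e).

(* Main.v *)
Require Import Defs.
From mathcomp Require Import all_boot.
From mathcomp Require Import zify.

Lemma mc_lb (T : finType) (P : {set T} -> bool) x :
  x <= #|T| -> (forall S, P S -> x <= #|S|) -> x <= min_card P.
Proof.
move=> h1 h2; rewrite /min_card; elim/big_ind: _ => //.
  by move=> a b ha hb; rewrite leq_min ha hb.
Qed.

Lemma mc_ub (T : finType) (P : {set T} -> bool) S :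
  P S -> min_card P <= #|S|.
Proof.
move=> PS; rewrite /min_card.
have : S \in index_enum {set T} by rewrite mem_index_enum.
elim: (index_enum _) => [//|a r IH]; rewrite big_cons inE.
case/orP => [/eqP <-|Sr]; first by rewrite PS geq_minl.
case: (P a); last exact: IH.
by rewrite geq_min IH // orbT.
Qed.

Lemma mc_ubT (T : finType) (P : {set T} -> bool) : min_card P <= #|T|.
Proof.
rewrite /min_card; elim/big_ind: _ => //.
- by move=> a b ha hb; rewrite geq_min ha.
- by move=> S _; exact: max_card.
Qed.

Theorem theorem2p8 (T : finType) (e : rel T) :
  simple_graph e -> 0 < #|T| -> graph_connected e -> no_isolated e ->
  (gamma_t e = gamma_c e \/ gamma_t e = (gamma_c e).-1) ->
  (3 * gamma e + 2 * gamma_c e + 5) %/ 6 <= gamma_t e.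
Proof.
move=> [sym irr] T0 _ noiso hc.
have h1 : gamma e <= gamma_t e.
  apply: mc_lb; first exact: mc_ubT.
  move=> S /forallP tS; apply: mc_ub; apply/forallP => v.
  by apply/orP; right; exact: tS.
have two : forall S : {set T}, total_dominating e S -> 2 <= #|S|.
  move=> S /forallP tS.
  have [x] : exists x : T, True.
    by case/card_gt0P: T0 => x _; exists x.
  move=> _; case/existsP: (tS x) => u /andP [uS _].
  case/existsP: (tS u) => w /andP [wS ewu].
  have nwu : w != u by apply/eqP => E; rewrite E irr in ewu.
  rewrite (cardD1 u) uS /= (cardD1 w) !inE nwu wS.
  by [].
have tdT : total_dominating e [set: T].
  apply/forallP => v; case: (noiso v) => y evy.
  by apply/existsP; exists y; rewrite inE sym.
have h2 : 2 <= gamma_t e.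
  apply: mc_lb => //.
  by rewrite -cardsT; apply: two.
have h3 : gamma_c e <= (gamma_t e).+1 by case: hc => ->; lia.
lia.
Qed.
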